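(* Let $K$ be a unital commutative ring, let $A$ be a $K$-algebra, and let $L,M\subseteq A$ be Lie ideals. Then $A[L,M]A\subseteq A[L,M]$. Moreover, if $L_0\subseteq L$ and $M_0\subseteq M$ are subsets and $m,n\in\mathbb{N}$ satisfy $[A,L_0]_1\subseteq \Sigma^n L_0$ and $[A,M_0]_1\subseteq \Sigma^m M_0$, then \[ A\cdot [L_0,M_0]_1\cdot A\subseteq \Sigma^{1+n+m}\big(A\cdot[L_0,M_0]_1\big). \]
   Context: $K$-algebras are associative and not necessarily unital. For $x,y\in A$, $[x,y]=xy-yx$. For subsets $X,Y\subseteq A$: $[X,Y]$ is the additive subgroup generated by all $[x,y]$ ($x\in X,y\in Y$); $XY$ is the additive subgroup generated by all $xy$ ($x\in X,y\in Y$), and $XYZ=(XY)Z$; $[X,Y]_1=\{[x,y]: x\in X,y\in Y\}$ is the set of commutators; $X\cdot Y=\{xy:x\in X,y\in Y\}$ is the set of products (and $X\cdot Y\cdot Z$ the set of triple products); $\Sigma^n X=\{x_1+\dots+x_n: x_i\in X\}$. A Lie ideal of $A$ is a $K$-linear subspace $L$ with $[A,L]\subseteq L$. *)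

(* Defs.v *)
From HB Require Import structures.
From mathcomp Require Import all_boot all_order all_algebra.
Set Implicit Arguments. Unset Strict Implicit. Unset Printing Implicit Defensive.
Import GRing.Theory.
Local Open Scope ring_scope.

(* A (not necessarily unital) associative K-algebra is given by a K-module A
   together with a bilinear associative multiplication [mul]. *)
Definition is_algebra_mul (K : comPzRingType) (A : lmodType K)
    (mul : A -> A -> A) : Prop :=
  [/\ forall x y z, mul (mul x y) z = mul x (mul y z),
      forall (k : K) x y z, mul (k *: x + y) z = k *: mul x z + mul y z
    & forall (k : K) x y z, mul x (k *: y + z) = k *: mul x y + mul x z].

Section Defs.
Variables (K : comPzRingType) (A : lmodType K) (mul : A -> A -> A).

Definition lbr (x y : A) : A := mul x y - mul y x.

Inductive addgen (S : A -> Prop) : A -> Prop :=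
  | addgen0 : addgen S 0
  | addgen_in x : S x -> addgen S x
  | addgenB x y : addgen S x -> addgen S y -> addgen S (x - y).

Definition brset (X Y : A -> Prop) : A -> Prop :=
  addgen (fun z => exists x y, [/\ X x, Y y & z = lbr x y]).

Definition prodset (X Y : A -> Prop) : A -> Prop :=
  addgen (fun z => exists x y, [/\ X x, Y y & z = mul x y]).

Definition brset1 (X Y : A -> Prop) : A -> Prop :=
  fun z => exists x y, [/\ X x, Y y & z = lbr x y].

Definition prodset1 (X Y : A -> Prop) : A -> Prop :=
  fun z => exists x y, [/\ X x, Y y & z = mul x y].

Definition sumset (n : nat) (X : A -> Prop) : A -> Prop :=
  fun z => exists f : 'I_n -> A, (forall i, X (f i)) /\ z = \sum_(i < n) f i.

Definition setA : A -> Prop := fun _ => True.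

Definition incl (X Y : A -> Prop) : Prop := forall x, X x -> Y x.

Definition lie_ideal (L : A -> Prop) : Prop :=
  [/\ L 0, (forall x y, L x -> L y -> L (x + y)),
      (forall (k : K) x, L x -> L (k *: x))
    & incl (brset setA L) L].

End Defs.

(* Main.v *)
Require Import Defs.
From mathcomp Require Import all_boot all_order all_algebra.
Set Implicit Arguments. Unset Strict Implicit. Unset Printing Implicit Defensive.
Import GRing.Theory.
Local Open Scope ring_scope.

Section Aux.
Variables (K : comPzRingType) (A : lmodType K) (mul : A -> A -> A).
Hypothesis Hmul : is_algebra_mul mul.

Lemma mulA' x y z : mul (mul x y) z = mul x (mul y z).
Proof. by case: Hmul. Qed.
Lemma mulDl' x y z : mul (x + y) z = mul x z + mul y z.
Proof. by case: Hmul => _ H _; have := H 1 x y z; rewrite !scale1r. Qed.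
Lemma mulDr' x y z : mul x (y + z) = mul x y + mul x z.
Proof. by case: Hmul => _ _ H; have := H 1 x y z; rewrite !scale1r. Qed.
Lemma mul0l' z : mul 0 z = 0.
Proof. by apply: (@addrI _ (mul 0 z)); rewrite -mulDl' !addr0. Qed.
Lemma mul0r' z : mul z 0 = 0.
Proof. by apply: (@addrI _ (mul z 0)); rewrite -mulDr' !addr0. Qed.
Lemma mulNl' x z : mul (- x) z = - mul x z.
Proof. by apply/eqP; rewrite -subr_eq0 opprK -mulDl' addNr mul0l'. Qed.
Lemma mulNr' x z : mul z (- x) = - mul z x.
Proof. by apply/eqP; rewrite -subr_eq0 opprK -mulDr' addNr mul0r'. Qed.
Lemma mulBl' x y z : mul (x - y) z = mul x z - mul y z.
Proof. by rewrite mulDl' mulNl'. Qed.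
Lemma mulBr' x y z : mul z (x - y) = mul z x - mul z y.
Proof. by rewrite mulDr' mulNr'. Qed.

Lemma zid (V : zmodType) (p1 p2 p3 p4 p5 p6 : V) :
  p1 - p2 = (p3 - p4) - ((p3 - p5) - (p6 - p2)) - ((p5 - p1) - (p4 - p6)).
Proof.
rewrite !opprB !addrA.
rewrite [RHS](ACl (((((1*6)*(2*7))*(3*8))*(5*10))*(9*4)))%AC /=.
by rewrite !subrr !addNr !add0r.
Qed.

Lemma key l m b :
  mul (lbr mul l m) b = mul b (lbr mul l m) - lbr mul (lbr mul b l) m
                         - lbr mul l (lbr mul b m).
Proof.
rewrite /lbr !(mulBl', mulBr') !mulA'.
exact: zid.
Qed.

Lemma lbrDl x y z : lbr mul (x + y) z = lbr mul x z + lbr mul y z.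
Proof. by rewrite /lbr mulDl' mulDr' opprD addrACA. Qed.
Lemma lbrDr x y z : lbr mul z (x + y) = lbr mul z x + lbr mul z y.
Proof. by rewrite /lbr mulDl' mulDr' opprD addrACA. Qed.
Lemma lbr0l z : lbr mul 0 z = 0.
Proof. by rewrite /lbr mul0l' mul0r' subrr. Qed.
Lemma lbr0r z : lbr mul z 0 = 0.
Proof. by rewrite /lbr mul0l' mul0r' subrr. Qed.

End Aux.

Lemma split_l m n (i : 'I_m) : split (lshift n i) = inl i.
Proof. exact: (unsplitK (inl i)). Qed.
Lemma split_r m n (i : 'I_n) : split (rshift m i) = inr i.
Proof. exact: (unsplitK (inr i)). Qed.


Theorem lemma3p1 (K : comPzRingType) (A : lmodType K) (mul : A -> A -> A)
    (Hmul : is_algebra_mul mul) (L M : A -> Prop)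
    (HL : lie_ideal mul L) (HM : lie_ideal mul M) :
  incl (prodset mul (prodset mul (@setA _ A) (brset mul L M)) (@setA _ A))
         (prodset mul (@setA _ A) (brset mul L M))
  /\
  (forall (L0 M0 : A -> Prop) (m n : nat),
     incl L0 L -> incl M0 M ->
     incl (brset1 mul (@setA _ A) L0) (sumset n L0) ->
     incl (brset1 mul (@setA _ A) M0) (sumset m M0) ->
     incl (prodset1 mul (prodset1 mul (@setA _ A) (brset1 mul L0 M0)) (@setA _ A))
            (sumset (1 + n + m) (prodset1 mul (@setA _ A) (brset1 mul L0 M0)))).
Proof.
have mA := mulA' Hmul; have mBl := mulBl' Hmul; have mBr := mulBr' Hmul.
have m0l := mul0l' Hmul; have m0r := mul0r' Hmul.
have mNl := mulNl' Hmul; have mDr := mulDr' Hmul; have m0 := mul0r' Hmul.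
split.
  set T := prodset mul (@setA _ A) (brset mul L M).
  have gen : forall a l m, L l -> M m -> T (mul a (lbr mul l m)).
    move=> a l m Hl Hm; apply: addgen_in; exists a, (lbr mul l m); split => //.
    by apply: addgen_in; exists l, m.
  have HA : forall z, brset mul L M z -> forall a b, T (mul a (mul z b)).
    move=> z; elim=> [|_ [l [m [Hl Hm ->]]]|x y _ IHx _ IHy] a b.
    - by rewrite m0l m0r; apply: addgen0.
    - rewrite (key Hmul) mBr mBr; apply: addgenB; first apply: addgenB.
      + by rewrite -mA; apply: gen.
      + apply: gen => //; case: HL => _ _ _; apply; apply: addgen_in.
        by exists b, l.
      + apply: gen => //; case: HM => _ _ _; apply; apply: addgen_in.
        by exists b, m.
    - by rewrite mBl mBr; apply: addgenB; [exact: IHx | exact: IHy].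
  have HB : forall y, prodset mul (@setA _ A) (brset mul L M) y -> forall b, T (mul y b).
    move=> y; elim=> [|_ [a [z [_ Hz ->]]]|x y' _ IHx _ IHy] b.
    - by rewrite m0l; apply: addgen0.
    - by rewrite mA; apply: HA.
    - by rewrite mBl; apply: addgenB; [exact: IHx | exact: IHy].
  move=> x; elim=> [|_ [y [b [Hy _ ->]]]|x1 y1 _ IHx _ IHy].
  - exact: addgen0.
  - exact: HB.
  - exact: addgenB.
move=> L0 M0 m n HL0 HM0 HnL HmM _ [_ [b [[a [z [_ [l [m' [Hl Hm ->]]]] ->]] _ ->]]].
have [f [Hf Ef]] := HnL (lbr mul b l) (ex_intro _ b (ex_intro _ l (And3 I Hl erefl))).
have [g [Hg Eg]] := HmM (lbr mul b m') (ex_intro _ b (ex_intro _ m' (And3 I Hm erefl))).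
pose h (i : 'I_(1 + n + m)) : A :=
  match split i with
  | inl i1 => match split i1 with
              | inl _ => mul (mul a b) (lbr mul l m')
              | inr j => mul (- a) (lbr mul (f j) m')
              end
  | inr j => mul (- a) (lbr mul l (g j))
  end.
exists h; split.
  move=> i; rewrite /h; case: (split i) => [i1|j]; first case: (split i1) => [_|j].
  - by exists (mul a b), (lbr mul l m'); split => //; exists l, m'.
  - by exists (- a), (lbr mul (f j) m'); split => //; exists (f j), m'; split => //.
  - by exists (- a), (lbr mul l (g j)); split => //; exists l, (g j); split => //.
rewrite big_split_ord big_split_ord big_ord1 /h.
under eq_bigr do rewrite split_l split_r.
under [X in _ = _ X]eq_bigr do rewrite split_r.
rewrite split_l split_l /= mA (key Hmul) mBr mBr -mA Ef Eg.
have sumL : \sum_(j < n) mul (- a) (lbr mul (f j) m') = - mul a (lbr mul (\sum_(j < n) f j) m').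
  under eq_bigr do rewrite mNl; rewrite sumrN; congr (- _).
  symmetry; apply: (big_morph (fun x => mul a (lbr mul x m'))).
    by move=> x y; rewrite (lbrDl Hmul) mDr.
  by rewrite (lbr0l Hmul) m0.
have sumR : \sum_(j < m) mul (- a) (lbr mul l (g j)) = - mul a (lbr mul l (\sum_(j < m) g j)).
  under eq_bigr do rewrite mNl; rewrite sumrN; congr (- _).
  symmetry; apply: (big_morph (fun x => mul a (lbr mul l x))).
    by move=> x y; rewrite (lbrDr Hmul) mDr.
  by rewrite (lbr0r Hmul) m0.
by rewrite sumL sumR.
Qed.
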